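(* For every integer $N\ge 0$, let $T(N)$ be the number of tilings of a $2\times 3\times N$ box by $N$ bricks of size $1\times 2\times 3$. Then, as formal power series, \[ \sum_{N\ge 0} T(N)\,z^N=\frac{1}{1-z-z^2-3z^3}. \]
   Context: A tiling of a $k\times m\times n$ box (made of $kmn$ unit cubes) by $a\times b\times c$ bricks is a partition of the box into non-overlapping axis-parallel boxes with integer corner coordinates, each congruent (by an axis-permuting placement) to the $a\times b\times c$ brick; all orientations are allowed. Tilings related by symmetries of the box are counted as distinct. The empty tiling counts once for $N=0$. *)

(* Defs.v *)
From mathcomp Require Import all_boot all_order all_algebra.
Set Implicit Arguments. Unset Strict Implicit. Unset Printing Implicit Defensive.

(* Unit cubes of the 2 x 3 x N box: cube (i,j,k) occupies [i,i+1]x[j,j+1]x[k,k+1]. *)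
Definition cell (N : nat) : finType := ('I_2 * 'I_3 * 'I_N)%type.

Definition boxset (N : nat) (c : cell N) (d : seq nat) : {set cell N} :=
  [set p : cell N |
     [&& (c.1.1 <= p.1.1 < c.1.1 + nth 0 d 0)%N,
         (c.1.2 <= p.1.2 < c.1.2 + nth 0 d 1)%N &
         (c.2 <= p.2 < c.2 + nth 0 d 2)%N]].

Definition is_brick (N : nat) (B : {set cell N}) : bool :=
  [exists c : cell N,
    has (fun d : seq nat =>
           [&& (c.1.1 + nth 0 d 0 <= 2)%N, (c.1.2 + nth 0 d 1 <= 3)%N,
               (c.2 + nth 0 d 2 <= N)%N & B == boxset c d])
        (permutations [:: 1; 2; 3]%N)].

Definition is_tiling (N : nat) (P : {set {set cell N}}) : bool :=
  partition P [set: cell N] && [forall B in P, is_brick B].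

Definition T (N : nat) : nat := #|[set P : {set {set cell N}} | is_tiling P]|.

Definition denom_coef (i : nat) : int := nth 0%R [:: 1; -1; -1; -3]%R i.

(* Main.v *)
Require Import Defs.
From mathcomp Require Import all_boot all_order all_algebra.
From mathcomp Require Import zify.
Set Implicit Arguments. Unset Strict Implicit. Unset Printing Implicit Defensive.

Definition bx M (a b z : nat) (d : seq nat) : {set cell M} :=
  [set p : cell M | [&& (a <= p.1.1 < a + nth 0 d 0)%N,
         (b <= p.1.2 < b + nth 0 d 1)%N &
         (z <= p.2 < z + nth 0 d 2)%N]].

Definition perms3 := permutations [:: 1; 2; 3]%N.
Lemma perms3E : perms3 = [:: [:: 2; 1; 3]; [:: 1; 2; 3]; [:: 3; 1; 2];
   [:: 1; 3; 2]; [:: 2; 3; 1]; [:: 3; 2; 1]]%N.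
Proof. by vm_compute. Qed.

Definition fits M a b z d := [&& d \in perms3, (a + nth 0 d 0 <= 2)%N,
   (b + nth 0 d 1 <= 3)%N & (z + nth 0 d 2 <= M)%N].

Lemma perms3P d : d \in perms3 -> d = [:: 2; 1; 3]%N \/ d = [:: 1; 2; 3]%N \/ d = [:: 3; 1; 2]%N \/
   d = [:: 1; 3; 2]%N \/ d = [:: 2; 3; 1]%N \/ d = [:: 3; 2; 1]%N.
Proof.
rewrite perms3E !inE => H.
repeat (case/orP: H => [/eqP->|H]; [by do ?[by left|right]|]).
by move/eqP: H => ->; do ?[by left|right].
Qed.

Lemma perms_pos d i : d \in perms3 -> (0 < nth 0 d i)%N = (i < 3)%N.
Proof.
move/perms3P; case=> [->|[->|[->|[->|[->|->]]]]].
all: case: i => [|[|[|i]]] //; by rewrite nth_default.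
Qed.

Lemma is_brickP M (B : {set cell M}) :
  reflect (exists a b z d, fits M a b z d /\ B = bx M a b z d) (is_brick B).
Proof.
apply: (iffP existsP).
  move=> [c /hasP [d hd /and4P [h1 h2 h3 /eqP ->]]].
  exists c.1.1, c.1.2, c.2, d; split => //.
  by rewrite /fits /perms3 hd h1 h2 h3.
move=> [a [b [z [d [/and4P [hd h1 h2 h3] ->]]]]].
have p0 : (0 < nth 0 d 0)%N by rewrite perms_pos.
have p1 : (0 < nth 0 d 1)%N by rewrite perms_pos.
have p2 : (0 < nth 0 d 2)%N by rewrite perms_pos.
have ha : (a < 2)%N by lia.
have hb : (b < 3)%N by lia.
have hz : (z < M)%N by lia.
exists (Ordinal ha, Ordinal hb, Ordinal hz); apply/hasP; exists d => //=.
by apply/and4P; split => //; apply/eqP.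
Qed.

Lemma brick_corner M a b z d (hf : fits M a b z d) :
  exists p : cell M, [/\ p \in bx M a b z d, nat_of_ord p.1.1 = a,
     nat_of_ord p.1.2 = b & nat_of_ord p.2 = z].
Proof.
case/and4P: hf => hd h1 h2 h3.
have p0 : (0 < nth 0 d 0)%N by rewrite perms_pos.
have p1 : (0 < nth 0 d 1)%N by rewrite perms_pos.
have p2 : (0 < nth 0 d 2)%N by rewrite perms_pos.
have ha : (a < 2)%N by lia.
have hb : (b < 3)%N by lia.
have hz : (z < M)%N by lia.
exists (Ordinal ha, Ordinal hb, Ordinal hz); split => //.
rewrite inE /=; apply/and3P; split; apply/andP; split; lia.
Qed.

Lemma tilingP M (P : {set {set cell M}}) :
  is_tiling P <-> [/\ forall B, B \in P -> is_brick B,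
                      forall x, exists2 B, B \in P & x \in B &
                      forall B B' x, B \in P -> B' \in P -> x \in B -> x \in B' -> B = B'].
Proof.
split.
  case/andP=> /and3P [/eqP hc ht h0] /forallP hb; split.
  - by move=> B hB; have := hb B; rewrite hB.
  - move=> x; have : x \in cover P by rewrite hc inE.
    by case/bigcupP=> B hB hx; exists B.
  - move=> B B' x hB hB' hx hx'; case: (eqVneq B B') => // ne.
    by have := disjointFr ((trivIsetP ht) B B' hB hB' ne) hx; rewrite hx'.
case=> hb hc hu; apply/andP; split; last by apply/forallP=> B; apply/implyP; apply: hb.
apply/and3P; split.
- apply/eqP/setP=> x; rewrite inE; case: (hc x) => B hB hx.
  by apply/bigcupP; exists B.
- apply/trivIsetP=> B B' hB hB' ne; apply/pred0P=> x /=.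
  apply/negbTE/negP=> /andP [h1 h2]; move/eqP: ne; apply; exact: hu h1 h2.
- apply/negP=> h0; case/is_brickP: (hb _ h0) => a [b [z [d [hf e]]]].
  case: (brick_corner hf) => p [hp _ _ _].
  by move: hp; rewrite -e inE.
Qed.


Lemma sh_proof k M (z : 'I_(M - k)) : (k + z < M)%N.
Proof. by rewrite -ltn_subRL. Qed.

Definition sh k M (p : cell (M - k)) : cell M := (p.1, Ordinal (sh_proof p.2)).

Lemma sh_inj k M : injective (@sh k M).
Proof.
move=> [[a b] z] [[a' b'] z'] /= [-> -> e]; congr (_, _).
by apply: val_inj; move: e => /= /addnI.
Qed.

Lemma sh_surj k M (p : cell M) : (k <= p.2)%N -> exists q, @sh k M q = p.
Proof.
move=> hk; have h : (p.2 - k < M - k)%N by have := ltn_ord p.2; lia.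
exists (p.1, Ordinal h); case: p hk h => [[a b] z] /= hk h; congr (_, _).
by apply: val_inj => /=; lia.
Qed.

Lemma sh_bx k M a b z d : @sh k M @: bx (M - k) a b z d = bx M a b (k + z) d.
Proof.
apply/setP=> p; apply/imsetP/idP.
  case=> q; rewrite !inE /= => /and3P [h1 h2 h3] ->; rewrite /= h1 h2 /=.
  by move: h3; lia.
rewrite inE => /and3P [h1 h2 h3].
have hk : (k <= p.2)%N by move: h3; lia.
case: (sh_surj hk) => q e; exists q => //.
move: h1 h2 h3; rewrite -e inE /= => -> -> /=; lia.
Qed.

Lemma sh_pre k M a b z d : (k <= z)%N ->
  @sh k M @^-1: bx M a b z d = bx (M - k) a b (z - k) d.
Proof.
move=> hk; apply/setP=> q; rewrite !inE /=.
by apply/idP/idP => /and3P [-> -> h] /=; lia.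
Qed.

Lemma brick_sh k M B : is_brick B -> is_brick (@sh k M @: B).
Proof.
case/is_brickP=> a [b [z [d [/and4P [hd h1 h2 h3] ->]]]].
rewrite sh_bx; apply/is_brickP; exists a, b, (k + z), d; split => //.
have p2 : (0 < nth 0 d 2)%N by rewrite perms_pos.
by rewrite /fits hd h1 h2 /=; move: h3; lia.
Qed.

Lemma brick_unsh k M (B : {set cell M}) : is_brick B ->
  (forall x, x \in B -> k <= x.2)%N -> exists B', is_brick B' /\ B = @sh k M @: B'.
Proof.
case/is_brickP=> a [b [z [d [hf ->]]]] hup.
case: (brick_corner hf) => c [hc _ _ hz].
have kz := hup _ hc; rewrite hz in kz.
exists (bx (M - k) a b (z - k) d); split.
  apply/is_brickP; exists a, b, (z - k), d; split => //.
  case/and4P: hf => hd h1 h2 h3; rewrite /fits hd h1 h2 /=; move: h3; lia.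
by rewrite sh_bx; congr bx; lia.
Qed.


Section Bij.
Variables (M k : nat) (C : {set {set cell M}}).
Hypothesis c1 : forall B, B \in C -> is_brick B.
Hypothesis c2 : forall B x, B \in C -> x \in B -> (x.2 < k)%N.
Hypothesis c3 : forall x : cell M, (x.2 < k)%N -> exists2 B, B \in C & x \in B.
Hypothesis c4 : forall B B' x, B \in C -> B' \in C -> x \in B -> x \in B' -> B = B'.

Local Notation shf := (@sh k M).
Definition F (Q : {set {set cell (M - k)}}) : {set {set cell M}} :=
  C :|: [set shf @: (B : {set cell (M - k)}) | B in Q].

Lemma sh_up (q : cell (M - k)) : (k <= (shf q).2)%N.
Proof. by rewrite /= leq_addr. Qed.

Lemma notC (B' : {set cell (M - k)}) : shf @: B' \notin C.
Proof.
apply/negP=> h; case/is_brickP: (c1 h) => a [b [z [d [hf e]]]].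
case: (brick_corner hf) => p [hp _ _ _]; rewrite -e in hp.
case/imsetP: hp => q hq ep.
have := c2 h (imset_f shf hq); have := sh_up q; lia.
Qed.

Lemma F_tiling Q : is_tiling Q -> is_tiling (F Q).
Proof.
case/tilingP=> hb hc hu; apply/tilingP; split.
- move=> B; rewrite inE => /orP [/c1 //|/imsetP [B' hB' ->]].
  exact/brick_sh/hb.
- move=> x; case: (ltnP x.2 k) => hx.
    by case: (c3 hx) => B hB hxB; exists B; rewrite // inE hB.
  case: (sh_surj hx) => q <-; case: (hc q) => B' hB' hq.
  by exists (shf @: B'); [rewrite inE imset_f ?orbT | apply: imset_f].
- move=> B1 B2 x; rewrite !inE => /orP [h1|/imsetP [B1' h1 ->]] /orP [h2|/imsetP [B2' h2 ->]].
  + exact: c4.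
  + move=> hx /imsetP [q _ e]; have := c2 h1 hx; have := sh_up q; rewrite -e; lia.
  + move=> /imsetP [q _ e] hx; have := c2 h2 hx; have := sh_up q; rewrite -e; lia.
  + move=> /imsetP [q1 hq1 ->] /imsetP [q2 hq2 /sh_inj e]; rewrite -e in hq2.
    by rewrite (hu _ _ _ h1 h2 hq1 hq2).
Qed.

Lemma memF Q (B' : {set cell (M - k)}) : (shf @: B' \in F Q) = (B' \in Q).
Proof.
by rewrite inE (negbTE (notC B')) /= (mem_imset _ _ (imset_inj (@sh_inj k M))).
Qed.

Lemma F_inj : injective F.
Proof. by move=> Q1 Q2 e; apply/setP=> B'; rewrite -!memF e. Qed.

Lemma F_surj P : is_tiling P -> C \subset P -> exists2 Q, is_tiling Q & P = F Q.
Proof.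
move=> hP hCP; case/tilingP: (hP) => hb hc hu.
have up : forall B, B \in P -> B \notin C -> forall x, x \in B -> (k <= x.2)%N.
  move=> B hB hnC x hx; rewrite leqNgt; apply/negP=> hlt.
  case: (c3 hlt) => B'' hB'' hxB''.
  have e := hu _ _ _ hB (subsetP hCP _ hB'') hx hxB''.
  by move: hnC; rewrite e hB''.
have unsh : forall B, B \in P -> B \notin C -> exists2 B', is_brick B' & B = shf @: B'.
  move=> B hB hnC; case: (brick_unsh (hb _ hB) (up _ hB hnC)) => B' [h1 h2].
  by exists B'.
exists [set B' : {set cell (M - k)} | shf @: B' \in P].
  apply/tilingP; split.
  - move=> B'; rewrite inE => h; case: (unsh _ h (notC B')) => B'' h1 /imset_inj.
    by move=> /(_ (@sh_inj k M)) ->.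
  - move=> q; case: (hc (shf q)) => B hB hq.
    have hnC : B \notin C.
      by apply/negP=> hC; have := c2 hC hq; have := sh_up q; lia.
    case: (unsh _ hB hnC) => B' _ e; exists B'; first by rewrite inE -e.
    by move: hq; rewrite e (mem_imset _ _ (@sh_inj k M)).
  - move=> B1 B2 q; rewrite !inE => h1 h2 hq1 hq2.
    apply: (imset_inj (@sh_inj k M)); apply: (hu _ _ (shf q) h1 h2); exact: imset_f.
apply/setP=> B; apply/idP/idP.
  move=> hB; case: (boolP (B \in C)) => hBC; first by rewrite inE hBC.
  case: (unsh _ hB hBC) => B' _ e; rewrite inE; apply/orP; right.
  by rewrite e imset_f // inE -e.
rewrite inE => /orP [/(subsetP hCP) //|/imsetP [B' hB' ->]].
by rewrite inE in hB'.
Qed.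

Lemma count_fix : #|[set P | is_tiling P & C \subset P]| = T (M - k).
Proof.
rewrite /T; transitivity #|F @: [set Q : {set {set cell (M - k)}} | is_tiling Q]|; last first.
  by apply: card_in_imset => Q1 Q2 _ _; apply: F_inj.
apply: eq_card => P; rewrite inE; apply/andP/imsetP.
  case=> h1 h2; case: (F_surj h1 h2) => Q hQ e; exists Q => //; by rewrite inE.
case=> Q; rewrite inE => hQ ->; split; first exact: F_tiling.
exact: subsetUl.
Qed.
End Bij.


Definition prm := (nat * nat * seq nat)%type.
Definition bxt M (t : prm) : {set cell M} := bx M t.1.1 t.1.2 0 t.2.
Definition cfg M (L : seq prm) : {set {set cell M}} := [set B | B \in map (@bxt M) L].
Definition inrect (t : prm) (u : 'I_2 * 'I_3) :=
  (t.1.1 <= u.1 < t.1.1 + nth 0 t.2 0)%N && (t.1.2 <= u.2 < t.1.2 + nth 0 t.2 1)%N.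
Definition valid k (L : seq prm) :=
  all (fun t => [&& t.2 \in perms3, (t.1.1 + nth 0 t.2 0 <= 2)%N,
                    (t.1.2 + nth 0 t.2 1 <= 3)%N & nth 0 t.2 2 == k]) L &&
  [forall u, count (inrect^~ u) L == 1%N].

Lemma count1_uniq (T : eqType) (p : pred T) s t t' :
  count p s = 1%N -> t \in s -> t' \in s -> p t -> p t' -> t = t'.
Proof.
elim: s => // h s IH /=; rewrite !inE.
case: (boolP (p h)) => ph /=.
  move=> /eqP; rewrite eqSS => /eqP /eqP; rewrite -leqn0 leqNgt -has_count => /hasPn hn.
  case/orP=> [/eqP->|ht]; case/orP=> [/eqP->|ht'] // pt pt'.
  - by move: (hn _ ht'); rewrite pt'.
  - by move: (hn _ ht); rewrite pt.
  - by move: (hn _ ht); rewrite pt.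
rewrite add0n => c; case/orP=> [/eqP->|ht]; first by rewrite (negbTE ph).
case/orP=> [/eqP->|ht']; first by move=> _; rewrite (negbTE ph).
exact: IH.
Qed.

Section Cfg.
Variables (M k : nat) (L : seq prm).
Hypothesis hv : valid k L.
Hypothesis hk : (k <= M)%N.

Lemma valid_t t : t \in L -> [&& t.2 \in perms3, (t.1.1 + nth 0 t.2 0 <= 2)%N,
                    (t.1.2 + nth 0 t.2 1 <= 3)%N & nth 0 t.2 2 == k].
Proof. by case/andP: hv => /allP h _ /h. Qed.

Lemma mem_bxt t (x : cell M) : t \in L -> (x \in bxt M t) = inrect t x.1 && (x.2 < k)%N.
Proof.
move/valid_t=> /and4P [_ _ _ /eqP e].
by rewrite /bxt inE /inrect e /= andbA.
Qed.

Lemma cfgP B : reflect (exists2 t, t \in L & B = bxt M t) (B \in cfg M L).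
Proof. by rewrite inE; apply: (iffP mapP). Qed.

Lemma cfg_c1 B : B \in cfg M L -> is_brick B.
Proof.
case/cfgP=> t ht ->; case/and4P: (valid_t ht) => h1 h2 h3 /eqP h4.
apply/is_brickP; exists t.1.1, t.1.2, 0%N, t.2; split => //.
by rewrite /fits h1 h2 h3 /= h4.
Qed.

Lemma cfg_c2 B x : B \in cfg M L -> x \in B -> (x.2 < k)%N.
Proof. by case/cfgP=> t ht -> ; rewrite mem_bxt // => /andP []. Qed.

Lemma cfg_c3 (x : cell M) : (x.2 < k)%N -> exists2 B, B \in cfg M L & x \in B.
Proof.
move=> hx; case/andP: hv => _ /forallP /(_ x.1) /eqP c.
have : has (inrect^~ x.1) L by rewrite has_count c.
case/hasP=> t ht hr; exists (bxt M t); first by apply/cfgP; exists t.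
by rewrite mem_bxt // hr hx.
Qed.

Lemma cfg_c4 B B' x : B \in cfg M L -> B' \in cfg M L -> x \in B -> x \in B' -> B = B'.
Proof.
case/cfgP=> t ht ->; case/cfgP=> t' ht' ->.
rewrite !mem_bxt // => /andP [h1 _] /andP [h2 _].
case/andP: hv => _ /forallP /(_ x.1) /eqP c.
by rewrite (count1_uniq c ht ht' h1 h2).
Qed.

Definition cond (P : {set {set cell M}}) := (k <= M)%N && all (fun t => bxt M t \in P) L.

Lemma cond_sub (P : {set {set cell M}}) : all (fun t => bxt M t \in P) L = (cfg M L \subset P).
Proof.
apply/allP/subsetP.
  by move=> h B /cfgP [t ht ->]; apply: h.
by move=> h t ht; apply: h; apply/cfgP; exists t.
Qed.
End Cfg.
Arguments cond M k L P : clear implicits.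

Lemma count_cond M k L : valid k L ->
  #|[set P | is_tiling P & cond M k L P]| = if (k <= M)%N then T (M - k) else 0%N.
Proof.
move=> hv; case: ifP => hk.
  rewrite -(count_fix (cfg_c1 hv hk) (cfg_c2 hv) (cfg_c3 hv) (cfg_c4 hv)).
  by apply: eq_card => P; rewrite !inE /cond hk cond_sub.
apply/eqP; rewrite cards_eq0; apply/eqP/setP => P; rewrite !inE /cond hk.
by rewrite andbF.
Qed.

Definition L1 : seq prm := [:: (0, 0, [:: 2; 3; 1])]%N.
Definition L2 : seq prm := [:: (0, 0, [:: 1; 3; 2]); (1, 0, [:: 1; 3; 2])]%N.
Definition L3a : seq prm := [:: (0, 0, [:: 1; 2; 3]); (0, 2, [:: 2; 1; 3]); (1, 0, [:: 1; 2; 3])]%N.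
Definition L3b : seq prm := [:: (0, 0, [:: 2; 1; 3]); (0, 1, [:: 1; 2; 3]); (1, 1, [:: 1; 2; 3])]%N.
Definition L3c : seq prm := [:: (0, 0, [:: 2; 1; 3]); (0, 1, [:: 2; 1; 3]); (0, 2, [:: 2; 1; 3])]%N.

Ltac vtac := apply/andP; split; [by [] |
  apply/forallP => -[[[|[|?]] ?] [[|[|[|?]]] ?]] //].
Lemma vL1 : valid 1 L1. Proof. vtac. Qed.
Lemma vL2 : valid 2 L2. Proof. vtac. Qed.
Lemma vL3a : valid 3 L3a. Proof. vtac. Qed.
Lemma vL3b : valid 3 L3b. Proof. vtac. Qed.
Lemma vL3c : valid 3 L3c. Proof. vtac. Qed.


Definition allc : seq prm := [seq t <- flatten [seq [seq (ab, d) | ab <- [seq (a, b) | a <- iota 0 2, b <- iota 0 3]] | d <- perms3] |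
   (t.1.1 + nth 0 t.2 0 <= 2) && (t.1.2 + nth 0 t.2 1 <= 3)]%N.
Definition cands (x y : nat) := [seq t <- allc | (t.1.1 <= x < t.1.1 + nth 0 t.2 0) && (t.1.2 <= y < t.1.2 + nth 0 t.2 1)]%N.

Lemma mem_allc a b d : d \in perms3 -> (a + nth 0 d 0 <= 2)%N -> (b + nth 0 d 1 <= 3)%N ->
  (a, b, d) \in allc.
Proof.
move/perms3P=> [->|[->|[->|[->|[->|->]]]]];
  case: a => [|[|a]]; case: b => [|[|[|b]]]; try by vm_compute.
all: move=> h1 h2; exfalso; move: h1 h2 => /=; lia.
Qed.

Section Layer0.
Variables (M : nat) (hM : (0 < M)%N) (P : {set {set cell M}}).
Hypothesis hP : is_tiling P.
Let z0 : 'I_M := Ordinal hM.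

Lemma brick_at0 (x : 'I_2) (y : 'I_3) :
  exists t, [/\ t \in cands x y, (nth 0 t.2 2 <= M)%N, bxt M t \in P & (x, y, z0) \in bxt M t].
Proof.
case/tilingP: hP => hb hc hu.
case: (hc (x, y, z0)) => B hB hxB.
case/is_brickP: (hb _ hB) => a [b [z [d [/and4P [hd h1 h2 h3] e]]]].
move: hxB; rewrite e inE /= => /and3P [r1 r2 r3].
have z00 : z = 0%N by move: r3; lia.
subst z; exists (a, b, d); split => //.
- by rewrite mem_filter /= r1 r2 mem_allc.
- by rewrite e in hB.
- by rewrite /bxt inE /= r1 r2 r3.
Qed.

Lemma conflict B B' (p q : cell M) : B \in P -> B' \in P -> p \in B -> p \in B' ->
  q \in B -> q \notin B' -> False.
Proof.
case/tilingP: hP => _ _ hu h1 h2 hp hp' hq.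
by move: hq; rewrite (hu _ _ _ h1 h2 hp hp') => ->.
Qed.
Lemma mem0 (x : 'I_2) (y : 'I_3) (t : prm) : (0 < nth 0 t.2 2)%N ->
  ((x, y, z0) \in bxt M t) = inrect t (x, y).
Proof. by move=> h; rewrite /bxt inE /inrect /= h andbT andbA. Qed.

Local Notation o2 n := (@Ordinal 2 n isT).
Local Notation o3 n := (@Ordinal 3 n isT).
Local Notation cl a b := (o2 a, o3 b, z0).

Ltac confl h1 h2 a b c d := exfalso; apply: (conflict h1 h2 (p := cl a b) (q := cl c d)); by rewrite mem0.
Ltac seqcase H := repeat (case/orP: H => [/eqP ? |H]; [subst|]); try (move/eqP: H => ?; subst).

Lemma cands00 : cands 0 0 = [:: (0, 0, [:: 2; 1; 3]); (0, 0, [:: 1; 2; 3]); (0, 0, [:: 1; 3; 2]); (0, 0, [:: 2; 3; 1])]%N.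
Proof. by vm_compute. Qed.
Lemma cands10 : cands 1 0 = [:: (0, 0, [:: 2; 1; 3]); (1, 0, [:: 1; 2; 3]); (1, 0, [:: 1; 3; 2]); (0, 0, [:: 2; 3; 1])]%N.
Proof. by vm_compute. Qed.
Lemma cands12 : cands 1 2 = [:: (0, 2, [:: 2; 1; 3]); (1, 1, [:: 1; 2; 3]); (1, 0, [:: 1; 3; 2]); (0, 0, [:: 2; 3; 1])]%N.
Proof. by vm_compute. Qed.
Lemma cands02 : cands 0 2 = [:: (0, 2, [:: 2; 1; 3]); (0, 1, [:: 1; 2; 3]); (0, 0, [:: 1; 3; 2]); (0, 0, [:: 2; 3; 1])]%N.
Proof. by vm_compute. Qed.
Lemma cands01 : cands 0 1 = [:: (0, 1, [:: 2; 1; 3]); (0, 0, [:: 1; 2; 3]); (0, 1, [:: 1; 2; 3]); (0, 0, [:: 1; 3; 2]); (0, 0, [:: 2; 3; 1])]%N.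
Proof. by vm_compute. Qed.
Lemma cands11 : cands 1 1 = [:: (0, 1, [:: 2; 1; 3]); (1, 0, [:: 1; 2; 3]); (1, 1, [:: 1; 2; 3]); (1, 0, [:: 1; 3; 2]); (0, 0, [:: 2; 3; 1])]%N.
Proof. by vm_compute. Qed.

Lemma classify : [|| cond M 1 L1 P, cond M 2 L2 P, cond M 3 L3a P, cond M 3 L3b P | cond M 3 L3c P].
Proof.
case: (brick_at0 (o2 0) (o3 0)) => t0 [ht0 hz0 hB0 _].
rewrite /= cands00 !inE in ht0; seqcase ht0.
-
  case: (brick_at0 (o2 0) (o3 1)) => t1 [ht1 hz1 hB1 _].
  rewrite /= cands01 !inE in ht1; seqcase ht1.
  + case: (brick_at0 (o2 0) (o3 2)) => t2 [ht2 hz2 hB2 _].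
    rewrite /= cands02 !inE in ht2; seqcase ht2.
    * by rewrite /cond /= hB0 hB1 hB2 hz0 !orbT.
    * confl hB2 hB1 0 1 0 2.
    * confl hB2 hB0 0 0 0 1.
    * confl hB2 hB0 0 0 0 1.
  + confl hB1 hB0 0 0 0 1.
  + case: (brick_at0 (o2 1) (o3 1)) => t2 [ht2 hz2 hB2 _].
    rewrite /= cands11 !inE in ht2; seqcase ht2.
    * confl hB2 hB1 0 1 1 1.
    * confl hB2 hB0 1 0 1 1.
    * by rewrite /cond /= hB0 hB1 hB2 hz0 !orbT.
    * confl hB2 hB0 1 0 1 1.
    * confl hB2 hB0 0 0 1 1.
  + confl hB1 hB0 0 0 0 1.
  + confl hB1 hB0 0 0 0 1.
-
  case: (brick_at0 (o2 0) (o3 2)) => t1 [ht1 hz1 hB1 _].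
  rewrite /= cands02 !inE in ht1; seqcase ht1.
  + case: (brick_at0 (o2 1) (o3 0)) => t2 [ht2 hz2 hB2 _].
    rewrite /= cands10 !inE in ht2; seqcase ht2.
    * confl hB2 hB0 0 0 1 0.
    * by rewrite /cond /= hB0 hB1 hB2 hz0 !orbT.
    * confl hB2 hB1 1 2 1 0.
    * confl hB2 hB0 0 0 1 0.
  + confl hB1 hB0 0 1 0 2.
  + confl hB1 hB0 0 0 0 2.
  + confl hB1 hB0 0 0 0 2.
-
  case: (brick_at0 (o2 1) (o3 0)) => t1 [ht1 hz1 hB1 _].
  rewrite /= cands10 !inE in ht1; seqcase ht1.
  + confl hB1 hB0 0 0 1 0.
  + case: (brick_at0 (o2 1) (o3 2)) => t2 [ht2 hz2 hB2 _].
    rewrite /= cands12 !inE in ht2; seqcase ht2.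
    * confl hB2 hB0 0 2 1 2.
    * confl hB2 hB1 1 1 1 2.
    * confl hB2 hB1 1 0 1 2.
    * confl hB2 hB0 0 0 1 0.
  + by rewrite /cond /= hB0 hB1 hz0 !orbT.
  + confl hB1 hB0 0 0 1 0.
-
  by rewrite /cond /= hB0 hz0.
Qed.
Lemma ex12 : ~~ (cond M 1 L1 P && cond M 2 L2 P). Proof. apply/negP; rewrite /cond /= => /andP [/andP [_ /andP [h1 _]] /andP [_ /andP [h2 _]]].
exfalso; apply: (conflict h1 h2 (p := cl 0 0) (q := cl 1 0)); by rewrite mem0. Qed.
Lemma ex13 : ~~ (cond M 1 L1 P && cond M 3 L3a P). Proof. apply/negP; rewrite /cond /= => /andP [/andP [_ /andP [h1 _]] /andP [_ /andP [h2 _]]].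
exfalso; apply: (conflict h1 h2 (p := cl 0 0) (q := cl 1 0)); by rewrite mem0. Qed.
Lemma ex14 : ~~ (cond M 1 L1 P && cond M 3 L3b P). Proof. apply/negP; rewrite /cond /= => /andP [/andP [_ /andP [h1 _]] /andP [_ /andP [h2 _]]].
exfalso; apply: (conflict h1 h2 (p := cl 0 0) (q := cl 0 1)); by rewrite mem0. Qed.
Lemma ex15 : ~~ (cond M 1 L1 P && cond M 3 L3c P). Proof. apply/negP; rewrite /cond /= => /andP [/andP [_ /andP [h1 _]] /andP [_ /andP [h2 _]]].
exfalso; apply: (conflict h1 h2 (p := cl 0 0) (q := cl 0 1)); by rewrite mem0. Qed.
Lemma ex23 : ~~ (cond M 2 L2 P && cond M 3 L3a P). Proof. apply/negP; rewrite /cond /= => /andP [/andP [_ /andP [h1 _]] /andP [_ /andP [h2 _]]].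
exfalso; apply: (conflict h1 h2 (p := cl 0 0) (q := cl 0 2)); by rewrite mem0. Qed.
Lemma ex24 : ~~ (cond M 2 L2 P && cond M 3 L3b P). Proof. apply/negP; rewrite /cond /= => /andP [/andP [_ /andP [h1 _]] /andP [_ /andP [h2 _]]].
exfalso; apply: (conflict h1 h2 (p := cl 0 0) (q := cl 0 1)); by rewrite mem0. Qed.
Lemma ex25 : ~~ (cond M 2 L2 P && cond M 3 L3c P). Proof. apply/negP; rewrite /cond /= => /andP [/andP [_ /andP [h1 _]] /andP [_ /andP [h2 _]]].
exfalso; apply: (conflict h1 h2 (p := cl 0 0) (q := cl 0 1)); by rewrite mem0. Qed.
Lemma ex34 : ~~ (cond M 3 L3a P && cond M 3 L3b P). Proof. apply/negP; rewrite /cond /= => /andP [/andP [_ /andP [h1 _]] /andP [_ /andP [h2 _]]].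
exfalso; apply: (conflict h1 h2 (p := cl 0 0) (q := cl 0 1)); by rewrite mem0. Qed.
Lemma ex35 : ~~ (cond M 3 L3a P && cond M 3 L3c P). Proof. apply/negP; rewrite /cond /= => /andP [/andP [_ /andP [h1 _]] /andP [_ /andP [h2 _]]].
exfalso; apply: (conflict h1 h2 (p := cl 0 0) (q := cl 0 1)); by rewrite mem0. Qed.
Lemma ex45 : ~~ (cond M 3 L3b P && cond M 3 L3c P).
Proof.
apply/negP; rewrite /cond /= => /andP [/andP [_ /and3P [_ h1 _]] /andP [_ /and3P [_ h2 _]]].
exfalso; apply: (conflict h2 h1 (p := cl 0 1) (q := cl 1 1)); by rewrite mem0.
Qed.

Lemma sum1 : (cond M 1 L1 P + cond M 2 L2 P + cond M 3 L3a P + cond M 3 L3b P + cond M 3 L3c P)%N = 1%N.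
Proof.
move: classify ex12 ex13 ex14 ex15 ex23 ex24 ex25 ex34 ex35 ex45.
by case: (cond M 1 L1 P); case: (cond M 2 L2 P); case: (cond M 3 L3a P);
   case: (cond M 3 L3b P); case: (cond M 3 L3c P).
Qed.
End Layer0.


Lemma sumb (X : finType) (A : {pred X}) (b : pred X) :
  (\sum_(x in A) (b x : nat) = #|[set x in A | b x]|)%N.
Proof.
rewrite -sum1_card big_mkcond /= [RHS]big_mkcond /=; apply: eq_bigr => x _.
by rewrite inE; case: (x \in A); case: (b x).
Qed.

Lemma T_rec M : (0 < M)%N ->
  T M = (T (M - 1) + (if (2 <= M)%N then T (M - 2) else 0) +
         3 * (if (3 <= M)%N then T (M - 3) else 0))%N.
Proof.
move=> hM; rewrite {1}/T -sum1_card.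
rewrite (eq_bigr (fun P => cond M 1 L1 P + cond M 2 L2 P + cond M 3 L3a P
   + cond M 3 L3b P + cond M 3 L3c P))%N; last first.
  by move=> P; rewrite inE => hP; rewrite (sum1 hM hP).
rewrite !big_split /= !sumb.
have e : forall k L, valid k L ->
  #|[set x in [set P : {set {set cell M}} | is_tiling P] | cond M k L x]| =
  (if (k <= M)%N then T (M - k) else 0%N).
  move=> k L hv; rewrite -(count_cond M hv); apply: eq_card => P; by rewrite !inE.
rewrite !e ?vL1 ?vL2 ?vL3a ?vL3b ?vL3c // hM.
case: (1 < M)%N; case: (2 < M)%N; lia.
Qed.

Lemma brick_ne M (B : {set cell M}) : is_brick B -> exists x, x \in B.
Proof.
case/is_brickP=> a [b [z [d [hf ->]]]]; case: (brick_corner hf) => p [hp _ _ _].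
by exists p.
Qed.

Lemma T0 : T 0 = 1%N.
Proof.
rewrite /T (_ : [set P | is_tiling P] = [set set0]) ?cards1 //.
apply/setP=> P; rewrite !inE; apply/idP/eqP.
  case/tilingP=> hb _ _; apply/setP=> B; rewrite inE; apply/negP=> hB.
  by case: (brick_ne (hb _ hB)) => [[[a b] [z hz]]].
move=> ->; apply/tilingP; split.
- by move=> B; rewrite inE.
- by move=> [[a b] [z hz]].
- by move=> B B' x; rewrite inE.
Qed.

Import GRing.Theory.

Lemma dc0 : denom_coef 0 = 1%R. Proof. by []. Qed.
Lemma dc1 : denom_coef 1 = (-1)%R. Proof. by []. Qed.
Lemma dc2 : denom_coef 2 = (-1)%R. Proof. by []. Qed.
Lemma dc3 : denom_coef 3 = (-3)%R. Proof. by []. Qed.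
Lemma dcb i : (4 <= i)%N -> denom_coef i = 0%R.
Proof. by move=> h; rewrite /denom_coef nth_default. Qed.

Lemma rec_abs (f : nat -> nat) : f 0%N = 1%N ->
  (forall M, (0 < M)%N -> f M = (f (M - 1) + (if (2 <= M)%N then f (M - 2) else 0) +
         3 * (if (3 <= M)%N then f (M - 3) else 0))%N) ->
  forall N : nat, (\sum_(i < N.+1) denom_coef i * (f (N - i)%N)%:Z = (N == 0%N)%:R)%R.
Proof.
move=> f0 fr N.
have r1 : f 1%N = 1%N by rewrite (fr 1%N isT) f0.
have r2 : f 2%N = 2%N by rewrite (fr 2%N isT) /= r1 f0.
have r3 : forall n, f n.+3 = (f n.+2 + f n.+1 + 3 * f n)%N.
  move=> n; rewrite (fr n.+3 isT) /=.
  rewrite (_ : (n.+3 - 1 = n.+2)%N); last by lia.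
  rewrite (_ : (n.+3 - 2 = n.+1)%N); last by lia.
  by rewrite (_ : (n.+3 - 3 = n)%N); last by lia.
rewrite -(big_mkord xpredT (fun i : nat => (denom_coef i * (f (N - i)%N)%:Z)%R)).
case: N => [|[|[|n]]].
- rewrite big_nat1 dc0 subnn f0 mul1r eqxx mulr1n; reflexivity.
- rewrite big_ltn; last by [].
  rewrite big_ltn; last by [].
  rewrite big_geq; last by [].
  rewrite dc0 dc1 addr0 subn0 subnn (_ : (1 == 0)%N = false); last by [].
  rewrite mulr0n r1 f0. lia.
- rewrite big_ltn; last by [].
  rewrite big_ltn; last by [].
  rewrite big_ltn; last by [].
  rewrite big_geq; last by [].
  rewrite dc0 dc1 dc2 addr0 subn0 subnn (_ : (2 == 0)%N = false); last by [].
  rewrite mulr0n r2 (_ : (2 - 1 = 1)%N); last by [].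
  rewrite r1 f0. lia.
- rewrite big_ltn; last by [].
  rewrite big_ltn; last by [].
  rewrite big_ltn; last by [].
  rewrite big_ltn; last by [].
  rewrite big_nat big1; last first.
    by move=> i /andP [hi _]; rewrite dcb ?mul0r.
  rewrite dc0 dc1 dc2 dc3 addr0 subn0 r3 (_ : (n.+3 == 0)%N = false); last by [].
  rewrite mulr0n (_ : (n.+3 - 1 = n.+2)%N); last by lia.
  rewrite (_ : (n.+3 - 2 = n.+1)%N); last by lia.
  rewrite (_ : (n.+3 - 3 = n)%N); last by lia.
  lia.
Qed.

Unset Implicit Arguments.
Local Open Scope ring_scope.

(* (1 - z - z^2 - 3 z^3) * (\sum_N T(N) z^N) = 1 as formal power series,
   stated coefficientwise via the Cauchy product. *)
Theorem mainTheorem18 :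
  forall N : nat,
    \sum_(i < N.+1) denom_coef i * (T (N - i))%:Z = (N == 0%N)%:R.
Proof.
exact: (rec_abs T0 T_rec).
Qed.
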